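(* Let $\sigma=(a_1,\ldots,a_s)$ be an $r$-good partition of $r$ and let $H=H(n,r,q\mid\sigma)$. Let $A,B$ be disjoint sets with $A\cup B=\{1,\ldots,s\}$ such that, with $a=\sum_{j\in A}a_j$ and $b=\sum_{j\in B}a_j$, one has $\gcd(a,b)=\gcd(a,r)=\gcd(b,r)=1$, and let $L=\mathrm{lcm}(a,b)$. If $r\mid n$ and $L\mid q$, then $H$ has a perfect matching, that is, $\nu(H)=\frac{nq}{r}$.
   Context: A $\sigma$-hypergraph $H=H(n,r,q\mid\sigma)$, for a partition $\sigma$ of $r$, is the $r$-uniform hypergraph whose vertex set is the disjoint union of $n$ classes $V_1,\ldots,V_n$, each of size $q$; an $r$-subset $K$ of vertices is an edge iff the multiset of non-zero values $|K\cap V_i|$ equals $\sigma$. The partition $\sigma$ is $r$-good if there is a subsequence $\pi$ of $(a_1,\ldots,a_s)$ (a selection of some of the parts, by index) such that $\sum_{a_j\in\pi}a_j$ is coprime to $r$. A perfect matching is a set of pairwise vertex-disjoint edges covering every vertex; $\nu(H)$ is the maximum size of a matching. *)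

(* Defs.v *)
From mathcomp Require Import all_boot.
Set Implicit Arguments. Unset Strict Implicit. Unset Printing Implicit Defensive.

Definition is_partition (r : nat) (sigma : seq nat) : bool :=
  all (fun x => 0 < x) sigma && (sumn sigma == r).

Definition r_good (r : nat) (sigma : seq nat) : Prop :=
  exists m : bitseq, coprime (sumn (mask m sigma)) r.

(* Vertices of H(n,r,q|sigma): pairs (class i, element within class). *)
Definition vtx (n q : nat) := ('I_n * 'I_q)%type.

Definition vclass (n q : nat) (i : 'I_n) : {set vtx n q} :=
  [set v | v.1 == i].

Definition sigma_edge (n r q : nat) (sigma : seq nat) (K : {set vtx n q}) : bool :=
  (#|K| == r) &&
  perm_eq [seq x <- [seq #|K :&: vclass q i| | i <- enum 'I_n] | x != 0] sigma.

Definition is_matching (n r q : nat) (sigma : seq nat) (M : {set {set vtx n q}}) : bool :=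
  [forall K in M, sigma_edge r sigma K] && trivIset M.

Definition is_perfect_matching (n r q : nat) (sigma : seq nat)
    (M : {set {set vtx n q}}) : bool :=
  is_matching r sigma M && (cover M == [set: vtx n q]).

(* Main.v *)
Require Import Defs.
From mathcomp Require Import all_boot.
From mathcomp Require Import zify.
Set Implicit Arguments. Unset Strict Implicit. Unset Printing Implicit Defensive.

Lemma card_tag s (w : 'I_s -> nat) (j0 : 'I_s) :
  #|[set t : {j : 'I_s & 'I_(w j)} | tag t == j0]| = w j0.
Proof.
have -> : [set t : {j : 'I_s & 'I_(w j)} | tag t == j0] =
          (fun x : 'I_(w j0) => Tagged (fun j => 'I_(w j)) x) @: setT.
  apply/setP => -[j x]; rewrite inE /=; apply/eqP/imsetP => [E|[y _ E]].
    by subst j0; exists x.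
  by move: (congr1 (fun t => tag t) E).
rewrite card_imset ?cardsT ?card_ord // => x y /eqP.
by rewrite eq_Tagged /= => /eqP.
Qed.

Lemma sum_tag s (w : 'I_s -> nat) (G : 'I_s -> nat) :
  \sum_(t : {j : 'I_s & 'I_(w j)}) G (tag t) = \sum_j G j * w j.
Proof.
rewrite (partition_big (fun t => tag t) xpredT) //=.
apply: eq_bigr => j _.
rewrite (eq_bigr (fun _ => G j)); last by move=> t /eqP ->.
rewrite (eq_bigl (fun t => t \in [set t : {j : 'I_s & 'I_(w j)} | tag t == j])); last first.
  by move=> t; rewrite inE.
by rewrite sum_nat_const card_tag mulnC.
Qed.

Lemma sum_mod1 m x d : d < m -> \sum_(0 <= k < m) ((k + x) %% m == d) = 1.
Proof.
move=> dm; elim: x => [|x IH].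
  rewrite big_mkord (eq_bigr (fun k : 'I_m => nat_of_bool (val k == d))); last first.
    by move=> k _; rewrite addn0 modn_small.
  rewrite (bigD1 (Ordinal dm)) //= eqxx big1 // => k /negP kd.
  by apply/eqP; rewrite eqb0; apply/negP => /eqP kd'; apply: kd; apply/eqP/val_inj.
have m0 : 0 < m by apply: leq_ltn_trans dm.
have E: \sum_(0 <= k < m.+1) ((k + x) %% m == d) =
        ((0 + x) %% m == d) + \sum_(0 <= k < m) ((k.+1 + x) %% m == d).
  by rewrite big_nat_recl.
rewrite big_nat_recr //= in E.
rewrite (eq_bigr (fun k => nat_of_bool ((k.+1 + x) %% m == d))); last by move=> k _; rewrite addnS.
rewrite -IH; apply/eqP; rewrite -(eqn_add2l ((0 + x) %% m == d)) -E.
by rewrite addnC add0n modnDl.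
Qed.

Lemma sum_modQ m Q x d : d < m -> \sum_(0 <= k < Q * m) ((k + x) %% m == d) = Q.
Proof.
move=> dm; elim: Q => [|Q IH]; first by rewrite mul0n big_geq.
rewrite mulSn addnC (big_cat_nat (n := Q * m)) ?leq_addr //= IH.
rewrite -{1}(add0n (Q * m)) big_addn addKn -addn1; congr (_ + _).
rewrite -(sum_mod1 x dm).
by apply: eq_bigr => k _; rewrite addnAC [_ + Q * m]addnC modnMDl.
Qed.

Lemma perm_counts n s (w : 'I_s -> nat) (phi : 'I_s -> 'I_n) (f : 'I_n -> nat) :
  injective phi -> (forall j, 0 < w j) -> (forall j, f (phi j) = w j) ->
  (forall i, (forall j, phi j != i) -> f i = 0) ->
  perm_eq [seq x <- [seq f i | i <- enum 'I_n] | x != 0] [seq w j | j <- enum 'I_s].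
Proof.
move=> phiI wpos fphi f0; apply/permP => P.
rewrite count_filter !count_map -!size_filter -!cardE. 
transitivity #|phi @: [set j | P (w j)]|; last first.
  by rewrite card_imset //; apply: eq_card => j; rewrite inE.
apply: eq_card => i; rewrite [in RHS]unfold_in /=.
apply/andP/imsetP => [[Pf f0i]|[j]].
  case: (pickP (fun j => phi j == i)) => [j /eqP ej|no].
    by exists j; rewrite // inE; move: Pf; rewrite -ej fphi.
  by move: f0i; rewrite f0 // => j; rewrite no.
by rewrite inE => Pw ->; rewrite fphi -lt0n wpos Pw.
Qed.

Lemma fiber_inj (W I : finType) q (cls : W -> I) :
  (forall i, #|[set x | cls x == i]| = q) ->
  exists h : W -> I * 'I_q, injective h /\ (forall x, (h x).1 = cls x).
Proof.
case: q => [|q] Hc.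
  have W0 : W -> False.
    move=> x; have := Hc (cls x); move/eqP; rewrite cards_eq0 => /eqP/setP/(_ x).
    by rewrite !inE eqxx.
  by exists (fun x => match W0 x with end); split => x; case: (W0 x).
exists (fun x => (cls x, inord (index x (enum [set y | cls y == cls x])))); split => // x y [exy].
rewrite exy => /(congr1 val); rewrite /= !inordK; last 2 first.
- by rewrite -(Hc (cls y)) cardE index_mem mem_enum inE.
- by rewrite -(Hc (cls y)) cardE -exy index_mem mem_enum inE.
move=> E; have xin : x \in enum [set y0 | cls y0 == cls y] by rewrite mem_enum inE exy.
have yin : y \in enum [set y0 | cls y0 == cls y] by rewrite mem_enum inE.
exact: (index_inj x xin yin E).
Qed.

Lemma fiber_card (W I : finType) q (cls : W -> I) :
  (forall i, #|[set x | cls x == i]| = q) -> #|W| = #|I| * q.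
Proof.
move=> Hc; rewrite -sum1_card (partition_big cls xpredT) //=.
rewrite (eq_bigr (fun _ => q)); first by rewrite sum_nat_const mulnC cardT.
move=> i _; rewrite -(Hc i) -sum1dep_card; apply: eq_bigl => x //.
Qed.

Lemma divmod_eq g o c i : o < c -> (g * c + o == i) = (g == i %/ c) && (o == i %% c).
Proof.
move=> oc; have c0 : 0 < c by apply: leq_ltn_trans oc.
apply/eqP/andP => [<-|[/eqP-> /eqP->]]; last by rewrite -divn_eq.
by rewrite divnMDl // divn_small // addn0 modnMDl modn_small.
Qed.

Lemma rank_lt s (A : {set 'I_s}) j : j \in A -> index j (enum A) < #|A|.
Proof. by move=> jA; rewrite cardE index_mem mem_enum. Qed.

Lemma rank_inj s (A : {set 'I_s}) j1 j2 : j1 \in A -> j2 \in A ->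
  index j1 (enum A) = index j2 (enum A) -> j1 = j2.
Proof.
move=> h1 h2 E; have x1 : j1 \in enum A by rewrite mem_enum.
have x2 : j2 \in enum A by rewrite mem_enum.
exact: (index_inj j1 x1 x2 E).
Qed.

Lemma card_le_sum s (w : 'I_s -> nat) (A : {set 'I_s}) :
  (forall j, 0 < w j) -> #|A| <= \sum_(j in A) w j.
Proof. by move=> wpos; rewrite -sum1_card; apply: leq_sum => j _; exact: wpos. Qed.

Lemma core (N a b q s : nat) (w : 'I_s -> nat) (A : {set 'I_s}) :
  (forall j, 0 < w j) -> \sum_(j in A) w j = a -> \sum_(j in ~: A) w j = b ->
  0 < a -> 0 < b -> a %| q -> b %| q ->
  exists M : {set {set vtx (N * (a + b)) q}},
   [/\ forall K, K \in M -> #|K| = a + b /\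
        perm_eq [seq x <- [seq #|K :&: vclass q i| | i <- enum 'I_(N * (a + b))] | x != 0]
                [seq w j | j <- enum 'I_s],
       trivIset M & cover M = setT].
Proof.
move=> wpos HA HB apos bpos aq bq.
have cA : #|A| <= a by rewrite -HA card_le_sum.
have cB : #|~: A| <= b by rewrite -HB card_le_sum.
pose rA j := index j (enum A). pose rB j := index j (enum (~: A)).
pose off (k : nat) (j : 'I_s) : nat :=
  if j \in A then (k + rA j) %% a else a + (k + rB j) %% b.
have offlt : forall k j, off k j < a + b.
  move=> k j; rewrite /off; case: ifP => _.
    by apply: (leq_trans (ltn_pmod _ apos)); rewrite leq_addr.
  by rewrite ltn_add2l ltn_pmod.
have philt : forall (g : 'I_N) k j, g * (a + b) + off k j < N * (a + b).
  move=> g k j; apply: (leq_trans (n := g * (a + b) + (a + b))); first by rewrite ltn_add2l.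
  by rewrite addnC -mulSn leq_mul2r ltn_ord orbT.
pose phi (e : 'I_N * 'I_q) j : 'I_(N * (a + b)) := Ordinal (philt e.1 e.2 j).
have offI : forall k, injective (off k).
  move=> k j1 j2; rewrite /off.
  case: (boolP (j1 \in A)) => h1; case: (boolP (j2 \in A)) => h2.
  - move/eqP; rewrite eqn_modDl modn_small ?modn_small => [/eqP||].
    + exact: rank_inj.
    + exact: leq_trans (rank_lt h2) cA.
    + exact: leq_trans (rank_lt h1) cA.
  - by have := ltn_pmod (k + rA j1) apos; lia.
  - by have := ltn_pmod (k + rA j2) apos; lia.
  - move/eqP; rewrite eqn_add2l eqn_modDl modn_small ?modn_small => [/eqP||].
    + by apply: rank_inj; rewrite inE.
    + by apply: leq_trans (rank_lt _) cB; rewrite inE.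
    + by apply: leq_trans (rank_lt _) cB; rewrite inE.
have phiI : forall e, injective (phi e).
  by move=> e j1 j2 /(congr1 val) /= /eqP; rewrite eqn_add2l => /eqP; apply: offI.
pose W : finType := (('I_N * 'I_q) * {j : 'I_s & 'I_(w j)})%type.
pose cls (x : W) := phi x.1 (tag x.2).
have Sk : forall j c0, c0 < a + b ->
    \sum_(k < q) (off k j == c0) = if j \in A then (c0 < a) * (q %/ a) else (a <= c0) * (q %/ b).
  move=> j c0 c0lt; rewrite /off; case: ifP => jA.
    case: ltnP => c0a.
      rewrite mul1n -(big_mkord xpredT (fun k => nat_of_bool ((k + rA j) %% a == c0))) -{1}(divnK aq); exact: sum_modQ.
    by rewrite mul0n big1 // => k _; have := ltn_pmod (k + rA j) apos; lia.
  case: leqP => c0a.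
    rewrite mul1n -(big_mkord xpredT (fun k => nat_of_bool (a + (k + rB j) %% b == c0))).
    rewrite -[in RHS](@sum_modQ b (q %/ b) (rB j) (c0 - a)); last by lia.
    rewrite divnK //; apply: eq_bigr => k _; congr nat_of_bool; apply/eqP/eqP; lia.
  by rewrite mul0n big1 // => k _; lia.
have fib : forall i, #|[set x : W | cls x == i]| = q.
  move=> i; rewrite -sum1dep_card big_mkcond /=.
  transitivity (\sum_(e : 'I_N * 'I_q) \sum_(t : {j : 'I_s & 'I_(w j)}) nat_of_bool (phi e (tag t) == i)).
    by rewrite pair_big; apply: eq_bigr => -[e t] _.
  rewrite (eq_bigr (fun e => \sum_j nat_of_bool (phi e j == i) * w j)); last first.
    by move=> e _; rewrite (sum_tag w (fun j => nat_of_bool (phi e j == i))).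
  rewrite exchange_big /=.
  have ab0 : 0 < a + b by rewrite addn_gt0 apos.
  have g0lt : i %/ (a + b) < N by rewrite ltn_divLR.
  have c0lt : i %% (a + b) < a + b by rewrite ltn_pmod.
  rewrite (eq_bigr (fun j => w j * (if j \in A then (i %% (a + b) < a) * (q %/ a)
                                     else (a <= i %% (a + b)) * (q %/ b)))); last first.
    move=> j _; rewrite -big_distrl /= mulnC -Sk //; congr (_ * _).
    transitivity (\sum_(g : 'I_N) \sum_(k : 'I_q) nat_of_bool (phi (g, k) j == i)).
      by rewrite pair_bigA; apply: eq_bigr => -[g k].
    rewrite (eq_bigr (fun g : 'I_N => (g == i %/ (a + b) :> nat) * \sum_(k < q) (off k j == i %% (a + b)))); last first.
      move=> g _; rewrite big_distrr /=; apply: eq_bigr => k _.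
      by rewrite -val_eqE /= divmod_eq // mulnb.
    rewrite -big_distrl /= (bigD1 (Ordinal g0lt)) //= eqxx big1 ?addn0 ?mul1n // => g /negP ne.
    by apply/eqP; rewrite eqb0; apply/negP => /eqP e; apply: ne; apply/eqP/val_inj.
  rewrite (bigID (fun j => j \in A)) /=.
  rewrite (eq_bigr (fun j => w j * ((i %% (a + b) < a) * (q %/ a)))); last by move=> j ->.
  rewrite [X in _ + X](eq_bigr (fun j => w j * ((a <= i %% (a + b)) * (q %/ b)))); last first.
    by move=> j /negbTE ->.
  rewrite -!big_distrl /= HA.
  rewrite (eq_bigl (fun j => j \in ~: A)) ?HB; last by move=> j; rewrite inE.
  case: ltnP => h /=.
    by rewrite mul1n mul0n muln0 addn0 mulnC divnK.
  by rewrite mul1n mul0n muln0 add0n mulnC divnK.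
have [h [hI h1]] := fiber_inj fib.
have Wc : #|W| = N * (a + b) * q by rewrite (fiber_card fib) card_ord.
have hsurj : forall v, v \in h @: setT.
  have : h @: setT == setT.
    rewrite eqEcard subsetT /= card_imset // cardsT Wc cardsT card_prod !card_ord leqnn //.
  by move/eqP => -> v; rewrite inE.
pose E (e : 'I_N * 'I_q) := [set x : W | x.1 == e].
have Ecard : forall e, #|E e| = a + b.
  move=> e; have -> : E e = (fun t => (e, t)) @: [set: {j : 'I_s & 'I_(w j)}].
    apply/setP => -[e' t]; rewrite !inE /=; apply/eqP/imsetP => [->|[t' _ [-> _]]] //.
    by exists t.
  rewrite card_imset; last by move=> t1 t2 [].
  rewrite cardsT -sum1_card (sum_tag w (fun _ => 1)).
  rewrite (bigID (fun j => j \in A)) /=.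
  rewrite [X in _ + X](eq_bigl (fun j => j \in ~: A)); last by move=> j; rewrite inE.
  by rewrite -HA -HB; congr (_ + _); apply: eq_bigr => j _; rewrite mul1n.
exists [set h @: E e | e : 'I_N * 'I_q]; split.
- move=> K /imsetP [e _ ->]; split; first by rewrite card_imset.
  pose f (i : 'I_(N * (a + b))) := #|[set t : {j : 'I_s & 'I_(w j)} | phi e (tag t) == i]|.
  have -> : [seq #|h @: E e :&: vclass q i| | i <- enum 'I_(N * (a + b))] =
            [seq f i | i <- enum 'I_(N * (a + b))].
    apply: eq_map => i.
    have -> : h @: E e :&: vclass q i = h @: ((fun t => (e, t)) @: [set t | phi e (tag t) == i]).
      apply/setP => v; rewrite !inE; apply/andP/imsetP => [[/imsetP[x xE ->] hx]|[x /imsetP[t ti ->] ->]].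
        exists x => //; move: xE hx; rewrite !inE h1 => /eqP <-; case: x => [e' t] /= => ci.
        by apply/imsetP; exists t; rewrite ?inE.
      by split; [apply/imsetP; exists (e, t); rewrite ?inE | rewrite h1; move: ti; rewrite inE].
    by rewrite card_imset // card_imset //; move=> t1 t2 [].
  apply: (perm_counts (phiI e)) => //.
    move=> j; rewrite /f -(card_tag w j); apply: eq_card => t; rewrite !inE.
    by rewrite (inj_eq (phiI e)).
  move=> i no; rewrite /f; apply/eqP; rewrite cards_eq0; apply/eqP/setP => t.
  by rewrite !inE (negbTE (no _)).
- apply/trivIsetP => K1 K2 /imsetP[e1 _ ->] /imsetP[e2 _ ->] ne.
  rewrite -setI_eq0; apply/eqP/setP => v; rewrite !inE.
  apply/negP => /andP [/imsetP[x1 x1E ->] /imsetP[x2 x2E /hI e12]].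
  move: x1E x2E ne; rewrite e12 !inE => /eqP -> /eqP ->.
  by rewrite eqxx.
- apply/setP => v; rewrite inE; apply/bigcupP.
  have /imsetP [x _ ->] := hsurj v.
  exists (h @: E x.1); first by apply: imset_f.
  by apply: imset_f; rewrite inE.
Qed.

Theorem lemma3p9 (n r q : nat) (sigma : seq nat) (A : {set 'I_(size sigma)}) :
  is_partition r sigma ->
  r_good r sigma ->
  let a := \sum_(j in A) nth 0 sigma j in
  let b := \sum_(j in ~: A) nth 0 sigma j in
  gcdn a b = 1 -> gcdn a r = 1 -> gcdn b r = 1 ->
  r %| n -> lcmn a b %| q ->
  exists M : {set {set vtx n q}}, is_perfect_matching r sigma M.
Proof.
move=> /andP [/allP pos /eqP sr] _ a b gab gar gbr rn Lq.
have wpos : forall j : 'I_(size sigma), 0 < nth 0 sigma j.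
  by move=> j; apply: pos; apply: mem_nth.
have rab : r = a + b.
  rewrite -sr sumnE (big_nth 0) big_mkord (bigID (fun j => j \in A)) /=.
  congr (_ + _); apply: eq_bigl => j; by rewrite inE.
case: (posnP q) => [q0|qpos].
  exists set0; rewrite /is_perfect_matching /is_matching.
  apply/andP; split; first by apply/andP; split; [apply/forall_inP => K; rewrite inE | apply/trivIsetP => K; rewrite inE].
  apply/eqP/setP => -[i p]; move: (ltn_ord p); by rewrite {2}q0.
have Lpos : 0 < lcmn a b by apply: dvdn_gt0 Lq.
have apos : 0 < a by move: Lpos; case: (a) => //; rewrite lcm0n.
have bpos : 0 < b by move: Lpos; case: (b) => //; rewrite lcmn0.
have aq : a %| q := dvdn_trans (dvdn_lcml a b) Lq.
have bq : b %| q := dvdn_trans (dvdn_lcmr a b) Lq.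
have [N ->] : exists N, n = N * r by exists (n %/ r); rewrite divnK.
rewrite rab.
have [M [HK Htriv Hcov]] := @core N a b q (size sigma) (fun j => nth 0 sigma j) A
    wpos erefl erefl apos bpos aq bq.
exists M; rewrite /is_perfect_matching /is_matching.
apply/andP; split; last by rewrite Hcov.
apply/andP; split => //.
apply/forall_inP => K KM; rewrite /sigma_edge; have [-> p] := HK K KM; rewrite eqxx /=.
have E : [seq nth 0 sigma j | j : 'I_(size sigma) <- enum 'I_(size sigma)] = sigma.
  transitivity (map (nth 0 sigma) (map val (enum 'I_(size sigma)))); first by rewrite -map_comp.
  by rewrite val_enum_ord map_nth_iota0 // take_size.
by rewrite E in p.
Qed.
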